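(* Let $n\ge 2$, $F$ the free group on $g_1,\dots,g_n$, $F^{(1)}=[F,F]$, $F^{(2)}=[F^{(1)},F^{(1)}]$, and let $w\in F^{(1)}\setminus F^{(2)}$. Let $K$ be a field of characteristic $0$. Then for every unipotent matrix $X\in\mathrm{SL}(2,K)$ there exists a group homomorphism $\psi:F\to\mathrm{SL}(2,K)$ with $\psi(w)=X$; equivalently, there exist $Z_1,\dots,Z_n\in\mathrm{SL}(2,K)$ with $w(Z_1,\dots,Z_n)=X$.
   Context: A matrix $X\in\mathrm{SL}(2,K)$ is unipotent if $X-I$ is nilpotent (the identity included). $w(Z_1,\dots,Z_n)$ is the value of the word map of $w$, obtained by substituting $Z_i$ for $g_i$. *)

(* Defs.v *)
From HB Require Import structures.
From mathcomp Require Import all_boot all_order all_algebra.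
Set Implicit Arguments. Unset Strict Implicit. Unset Printing Implicit Defensive.
Import GRing.Theory.
Local Open Scope ring_scope.

(* Free group F on generators g_0..g_(n-1): elements are words over letters
   (i, b), meaning g_i if b = false and g_i^-1 if b = true; two words denote
   the same element iff their free reductions coincide. *)
Definition letter (n : nat) := ('I_n * bool)%type.
Definition word (n : nat) := seq (letter n).

Definition linv n (a : letter n) : letter n := (a.1, ~~ a.2).
Definition winv n (w : word n) : word n := rev (map (@linv n) w).

Fixpoint freduce n (w : word n) : word n :=
  match w with
  | [::] => [::]
  | a :: s => match freduce s with
              | b :: r => if b == linv a then r else a :: b :: r
              | [::] => [:: a]
              end
  end.

Definition feq n (u v : word n) : Prop := freduce u = freduce v.

Definition fcomm n (u v : word n) : word n := winv u ++ winv v ++ u ++ v.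

Inductive fgen n (S : word n -> Prop) : word n -> Prop :=
  | fgen_S : forall u, S u -> fgen S u
  | fgen_1 : fgen S [::]
  | fgen_mul : forall u v, fgen S u -> fgen S v -> fgen S (u ++ v)
  | fgen_inv : forall u, fgen S u -> fgen S (winv u)
  | fgen_eq : forall u v, feq u v -> fgen S u -> fgen S v.

Fixpoint derived n (k : nat) : word n -> Prop :=
  match k with
  | 0 => fun _ => True
  | k'.+1 => @fgen n (fun c => exists u v, [/\ @derived n k' u, @derived n k' v & c = fcomm u v])
  end.

Definition word_eval (K : fieldType) n (Z : 'I_n -> 'M[K]_2) (w : word n) : 'M[K]_2 :=
  \prod_(a <- w) (if a.2 then invmx (Z a.1) else Z a.1).

Definition in_SL2 (K : fieldType) (X : 'M[K]_2) : Prop := \det X = 1.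

Definition unipotent (K : fieldType) (X : 'M[K]_2) : Prop :=
  exists k : nat, (X - 1) ^+ k = 0.

(* Main.v *)
Require Import Defs.
From HB Require Import structures.
From mathcomp Require Import all_boot all_order all_algebra.
From mathcomp Require Import zify ring.
Set Implicit Arguments. Unset Strict Implicit. Unset Printing Implicit Defensive.
Import GRing.Theory Num.Theory.
Local Open Scope ring_scope.

Section FreeGroup.
Variable n : nat.
Implicit Types (a b : letter n) (u v w s r : word n).

Lemma linvK a : linv (linv a) = a.
Proof. by case: a => i b; rewrite /linv /= negbK. Qed.

Lemma winv_cat u v : winv (u ++ v) = winv v ++ winv u.
Proof. by rewrite /winv map_cat rev_cat. Qed.

Lemma winvK u : winv (winv u) = u.
Proof. by rewrite /winv map_rev revK -map_comp (eq_map (@linvK)) map_id. Qed.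

Lemma winv_cons a u : winv (a :: u) = winv u ++ [:: linv a].
Proof. by rewrite -cat1s winv_cat. Qed.

Definition cred a r : word n :=
  match r with b :: r' => if b == linv a then r' else a :: r | [::] => [:: a] end.

Lemma freduce_cons a s : freduce (a :: s) = cred a (freduce s).
Proof. by rewrite /=; case: (freduce s). Qed.

Fixpoint redp w : bool :=
  match w with a :: s => (if s is b :: _ then b != linv a else true) && redp s | [::] => true end.

Lemma cred_red a r : redp r -> redp (cred a r).
Proof.
case: r => [|b r] //=; case/andP=> h1 h2.
case: ifP => // /negbT hb /=; rewrite hb /= h2 andbT.
by case: r h1 h2.
Qed.

Lemma credK a r : redp r -> cred a (cred (linv a) r) = r.
Proof.
case: r => [|b r] /=; first by rewrite eqxx.
case/andP=> h1 h2; rewrite linvK.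
have [eba|nb] := eqVneq b a.
  subst b; case: r h1 h2 => [|c r] //= h1 h2; by rewrite (negbTE h1).
by rewrite /= eqxx.
Qed.

Definition act u r := foldr cred r u.

Lemma act_cat u v r : act (u ++ v) r = act u (act v r).
Proof. by rewrite /act foldr_cat. Qed.

Lemma freduce_act w : freduce w = act w [::].
Proof. by elim: w => [|a w IH] //; rewrite freduce_cons IH. Qed.

Lemma act_red u r : redp r -> redp (act u r).
Proof. move=> hr; elim: u => [|a u IH] //=; exact: cred_red. Qed.

Lemma freduce_red w : redp (freduce w).
Proof. by rewrite freduce_act; apply: act_red. Qed.

Lemma cred_act a q r : redp q -> redp r -> cred a (act q r) = act (cred a q) r.
Proof.
case: q => [|b q] //= /andP[h1 h2] hr.
case: eqP => [->|nb] //.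
by rewrite credK // act_red.
Qed.

Lemma act_freduce u r : redp r -> act u r = act (freduce u) r.
Proof.
move=> hr; elim: u => [|a u IH] //.
by rewrite freduce_cons /= IH cred_act // freduce_red.
Qed.

Lemma freduce_cat u v : freduce (u ++ v) = act (freduce u) (freduce v).
Proof.
rewrite !freduce_act act_cat (act_freduce u) ?freduce_act //.
exact: act_red.
Qed.

Lemma feq_cat u u' v v' : feq u u' -> feq v v' -> feq (u ++ v) (u' ++ v').
Proof. by rewrite /feq !freduce_cat => -> ->. Qed.

Lemma feq_refl u : feq u u. Proof. by []. Qed.
Lemma feq_sym u v : feq u v -> feq v u. Proof. by []. Qed.
Lemma feq_trans u v x : feq u v -> feq v x -> feq u x.
Proof. by rewrite /feq => ->. Qed.

Lemma act_winv u r : redp r -> act (winv u) (act u r) = r.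
Proof.
elim: u r => //= a u IH r hr.
rewrite winv_cons act_cat /= -{2}(linvK a) credK ?IH //.
exact: act_red.
Qed.

Lemma feq_Vcancel u v : feq (winv u ++ u ++ v) v.
Proof.
by rewrite /feq !freduce_act !act_cat act_winv // -freduce_act freduce_red.
Qed.

Lemma feq_cancelV u v : feq (u ++ winv u ++ v) v.
Proof. by have := feq_Vcancel (winv u) v; rewrite winvK. Qed.

Lemma fgen_cat (S : word n -> Prop) u v : fgen S u -> fgen S v -> fgen S (u ++ v).
Proof. exact: fgen_mul. Qed.

End FreeGroup.

Section Comb.
Variable n : nat.
Implicit Types (a b : letter n) (u v w s r : word n).

Definition pos := {ffun 'I_n -> int}.
Definition sgnz (b : bool) : int := if b then -1 else 1.
Definition lstep a : pos := [ffun j => if j == a.1 then sgnz a.2 else 0].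
Fixpoint ev w : pos := if w is a :: s then lstep a + ev s else 0.

Lemma ev_cat u v : ev (u ++ v) = ev u + ev v.
Proof. by elim: u => [|a u IH] /=; rewrite ?add0r // IH addrA. Qed.

Lemma lstep_linv a : lstep (linv a) = - lstep a.
Proof.
apply/ffunP => j; rewrite !ffunE; case: a => i b /=.
by case: (j == i); case: b; rewrite ?oppr0.
Qed.

Lemma ev_winv u : ev (winv u) = - ev u.
Proof.
elim: u => [|a u IH] /=; first by rewrite oppr0.
by rewrite winv_cons ev_cat IH /= addr0 lstep_linv opprD addrC.
Qed.

Lemma ev_cred a r : ev (cred a r) = lstep a + ev r.
Proof.
case: r => [|b r] //=.
case: eqP => [->|] //=.
by rewrite lstep_linv addrA subrr add0r.
Qed.

Lemma ev_freduce w : ev (freduce w) = ev w.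
Proof. by elim: w => [|a w IH] //; rewrite freduce_cons ev_cred IH. Qed.

Lemma ev_feq u v : feq u v -> ev u = ev v.
Proof. by rewrite /feq => h; rewrite -ev_freduce h ev_freduce. Qed.

Lemma derived1_ev w : derived 1 w -> ev w = 0.
Proof.
elim => //=.
- move=> c [x [y [_ _ ->]]].
  rewrite /fcomm !ev_cat !ev_winv.
  by rewrite addrCA addKr addNr.
- by move=> x y _ hx _ hy; rewrite ev_cat hx hy addr0.
- by move=> x _ h; rewrite ev_winv h oppr0.
- by move=> x y /ev_feq <- _.
Qed.

Lemma derived_closed k :
  [/\ @derived n k [::], (forall u v, derived k u -> derived k v -> derived k (u ++ v))
    & forall u, derived k u -> derived k (winv u)].
Proof.
case: k => [|k] //=; split.
- exact: fgen_1.
- by move=> u v; apply: fgen_mul.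
- by move=> u; apply: fgen_inv.
Qed.

Section Balanced.
Variable E : eqType.
Variable S : word n -> Prop.
Hypothesis S0 : S [::].
Hypothesis Scat : forall u v, S u -> S v -> S (u ++ v).
Hypothesis Sinv : forall u, S u -> S (winv u).
Variable f : E -> word n.
Hypothesis Sf : forall e, S (f e).

Definition te (x : E * bool) : word n := if x.2 then winv (f x.1) else f x.1.
Definition balanced (l : seq (E * bool)) :=
  forall e, count_mem (e, false) l = count_mem (e, true) l.

Lemma S_flatten l : S (flatten (map te l)).
Proof.
elim: l => [|[e b] l IH] //=; apply: Scat => //.
by rewrite /te; case: b => //=; apply: Sinv.
Qed.

Lemma balanced_gen l : balanced l ->
  fgen (fun c => exists u v, [/\ S u, S v & c = fcomm u v]) (flatten (map te l)).
Proof.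
elim: {l}(size l).+1 {-2}l (ltnSn (size l)) => // m IH [|[e b] l] hsz hb.
  exact: fgen_1.
have hin : (e, ~~ b) \in l.
  have := hb e; rewrite /= !xpair_eqE eqxx /=.
  rewrite -has_pred1 has_count.
  by case: (b) => /=; lia.
case/splitPr: hin hsz hb => l1 l2 hsz hb.
have hb' : balanced (l1 ++ l2).
  move=> e'; have := hb e'; rewrite /= !count_cat /= !xpair_eqE.
  by case: (b); case: (e' == e) => /=; lia.
have hsz' : (size (l1 ++ l2) < m)%N by move: hsz; rewrite /= !size_cat /=; lia.
have := IH _ hsz' hb'.
rewrite map_cat flatten_cat => hMR.
rewrite /= map_cat flatten_cat /=.
set x := te (e, b).
have hxinv : te (e, ~~ b) = winv x by rewrite /x /te; case: (b) => //=; rewrite winvK.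
rewrite hxinv.
set M := flatten (map te l1); set R := flatten (map te l2).
have hSx : S x by rewrite /x /te; case: (b) => /=; [apply: Sinv|].
have hSM : S M by apply: S_flatten.
apply: (@fgen_eq _ _ (fcomm (winv x) (winv M) ++ (M ++ R))); last first.
  apply: fgen_mul => //; apply: fgen_S.
  by exists (winv x), (winv M); split => //; apply: Sinv.
rewrite /fcomm !winvK -!catA.
apply: feq_cat => //; apply: feq_cat => //; apply: feq_cat => //.
exact: feq_Vcancel.
Qed.
End Balanced.

Lemma ev_count w i :
  ev w i = (count_mem (i, false) w)%:Z - (count_mem (i, true) w)%:Z.
Proof.
elim: w => [|[j b] w IH] /=; first by rewrite ffunE.
rewrite ffunE IH ffunE /= !xpair_eqE.
rewrite (eq_sym j i); by case: (i == j); case: b => /=; lia.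
Qed.

Lemma level1 w : ev w = 0 -> derived 1 w.
Proof.
move=> h.
have [d0 dc di] := derived_closed 0.
have := @balanced_gen _ (derived 0) d0 dc di (fun i : 'I_n => [:: (i, false)]) (fun _ => I) w.
have -> : flatten (map (te (fun i : 'I_n => [:: (i, false)])) w) = w.
  by elim: w {h} => [|[i b] w IH] //=; rewrite IH; case: b.
apply=> e; have := ev_count w e; rewrite h ffunE => /esym/eqP; rewrite subr_eq0 eqz_nat => /eqP; exact.
Qed.

End Comb.

Section Lattice.
Variable n : nat.
Implicit Types (a b : letter n) (u v w s r : word n) (p q : pos n).

Definition gpow (i : 'I_n) (z : int) : word n :=
  match z with Posz m => nseq m (i, false) | Negz m => nseq m.+1 (i, true) end.
Definition gam p : word n := flatten [seq gpow i (p i) | i <- enum 'I_n].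
Definition fe (e : pos n * 'I_n) : word n :=
  gam e.1 ++ [:: (e.2, false)] ++ winv (gam (e.1 + lstep (e.2, false))).

Fixpoint edges p w : seq ((pos n * 'I_n) * bool) :=
  if w is a :: s then ((if a.2 then p + lstep a else p, a.1), a.2) :: edges (p + lstep a) s
  else [::].

Lemma ev_nseq m a j : ev (nseq m a) j = (lstep a j) *+ m.
Proof. by elim: m => [|m IH] /=; rewrite ffunE ?IH ?mulrS. Qed.

Lemma ev_gpow i z j : ev (gpow i z) j = if j == i then z else 0.
Proof.
case: z => m; rewrite /gpow ev_nseq ffunE /=; case: (j == i); rewrite ?mul0rn //. all: lia.
Qed.

Lemma ev_flatten (T : Type) (F : T -> word n) (l : seq T) j :
  ev (flatten (map F l)) j = \sum_(x <- l) ev (F x) j.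
Proof.
elim: l => [|x l IH] /=; first by rewrite big_nil ffunE.
by rewrite ev_cat ffunE IH big_cons.
Qed.

Lemma ev_gam p : ev (gam p) = p.
Proof.
apply/ffunP => j; rewrite ev_flatten.
under eq_bigr do rewrite ev_gpow.
rewrite big_enum /= (bigD1 j) //= eqxx big1 ?addr0 // => i /negbTE.
by rewrite eq_sym => ->.
Qed.

Lemma gam0 : gam 0 = [::].
Proof.
rewrite /gam; elim: (enum _) => [|i l IH] //=.
by rewrite IH ffunE.
Qed.

Lemma ev_fe e : ev (fe e) = 0.
Proof.
by rewrite /fe !ev_cat ev_winv !ev_gam /= addr0 addrA subrr.
Qed.

Lemma fe_derived e : derived 1 (fe e).
Proof. by apply: level1; apply: ev_fe. Qed.

Lemma lstep_true (i : 'I_n) : lstep (i, true) = - lstep (i, false).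
Proof. exact: (lstep_linv (i, false)). Qed.

Lemma tele p w :
  feq (gam p ++ w) (flatten (map (te fe) (edges p w)) ++ gam (p + ev w)).
Proof.
elim: w p => [|[i b] s IH] p /=; first by rewrite addr0 cats0.
set p' := p + lstep (i, b).
rewrite addrA -/p' -catA.
apply: (@feq_trans _ _ (te fe ((if b then p' else p, i), b) ++ gam p' ++ s)); last first.
  by apply: feq_cat => //; apply: IH.
rewrite /te /=; case: b @p' => p' /=.
  rewrite /fe !winv_cat winvK /=.
  have -> : p' + lstep (i, false) = p by rewrite /p' lstep_true subrK.
  have -> : winv [:: (i, false)] = [:: (i, true)] by [].
  rewrite -!catA -[(i, true) :: s]cat1s; apply: feq_cat => //; apply: feq_cat => //.
  by apply: feq_sym; apply: feq_Vcancel.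
rewrite /fe /p' -!catA -[(i, false) :: s]cat1s; apply: feq_cat => //; apply: feq_cat => //.
by apply: feq_sym; apply: feq_Vcancel.
Qed.

Lemma level2 w : derived 1 w -> balanced (edges 0 w) -> derived 2 w.
Proof.
move=> h1 hb.
have [d0 dc di] := @derived_closed n 1.
have := balanced_gen d0 dc di (@fe_derived) hb.
apply: fgen_eq.
have := tele 0 w; rewrite gam0 derived1_ev // addr0 gam0 cats0 /=.
by move=> h; apply: feq_sym.
Qed.

End Lattice.

Section Mx.
Variable K : fieldType.
Implicit Types (A B G : 'M[K]_2) (x y z t : K).

Lemma ord2_0 : (ord0 : 'I_2) = 0. Proof. exact: val_inj. Qed.
Lemma ord2_1 : (lift ord0 ord0 : 'I_2) = 1. Proof. exact: val_inj. Qed.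

Lemma mul22 A B i j : (A * B) i j = A i 0 * B 0 j + A i 1 * B 1 j.
Proof. by rewrite -mulmxE !mxE !big_ord_recl big_ord0 addr0 ord2_0 ord2_1. Qed.


Lemma det22 A : \det A = A 0 0 * A 1 1 - A 0 1 * A 1 0.
Proof.
rewrite (expand_det_row _ 0) !big_ord_recl big_ord0 addr0 /cofactor !det_mx11.
rewrite !mxE /= !expr0 !mul1r ord2_0 ord2_1.
rewrite /bump /= expr1 mulN1r mulrN.
by congr (A _ _ * A _ _ - A _ _ * A _ _); apply: val_inj.
Qed.

Lemma mx22P A B : A 0 0 = B 0 0 -> A 0 1 = B 0 1 -> A 1 0 = B 1 0 -> A 1 1 = B 1 1 -> A = B.
Proof.
move=> h00 h01 h10 h11; apply/matrixP => i j.
have e0 : forall h : (0 < 2)%N, Ordinal h = 0 by move=> h; apply: val_inj.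
have e1 : forall h : (1 < 2)%N, Ordinal h = 1 by move=> h; apply: val_inj.
case: i => [[|[|i]]] // hi; case: j => [[|[|j]]] // hj;
  by rewrite ?e0 ?e1.
Qed.

Definition mk x y : 'M[K]_2 := \matrix_(i, j)
  if (i : nat) == 0%N then (if (j : nat) == 0%N then x else y)
  else (if (j : nat) == 0%N then 0 else x^-1).

Lemma mk00 x y : mk x y 0 0 = x. Proof. by rewrite mxE. Qed.
Lemma mk01 x y : mk x y 0 1 = y. Proof. by rewrite mxE. Qed.
Lemma mk10 x y : mk x y 1 0 = 0. Proof. by rewrite mxE. Qed.
Lemma mk11 x y : mk x y 1 1 = x^-1. Proof. by rewrite mxE. Qed.
Definition mkE := (mk00, mk01, mk10, mk11).

Lemma mkM x y z t : x != 0 -> z != 0 ->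
  mk x y * mk z t = mk (x * z) (x * t + y / z).
Proof.
move=> hx hz; apply: mx22P; rewrite mul22 !mkE ?mul0r ?mulr0 ?addr0 ?add0r //.
by rewrite invfM mulrC.
Qed.

Lemma mk_1 : mk 1 0 = 1.
Proof.
apply: mx22P; rewrite !mkE ?invr1 !mxE //.
Qed.

Lemma det_mk x y : x != 0 -> \det (mk x y) = 1.
Proof. by move=> hx; rewrite det22 !mkE mulr0 subr0 mulfV. Qed.

Lemma invmx_right A B : A * B = 1 -> invmx A = B.
Proof.
move=> h.
have hA : A \in unitmx.
  rewrite unitmxE unitfE; apply/eqP => h0.
  by have := congr1 determinant h; rewrite detM h0 mul0r det1 => /eqP; rewrite eq_sym oner_eq0.
by rewrite -[invmx A]mulr1 -h mulrA -!mulmxE mulVmx // mul1mx.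
Qed.

Lemma mkV x y : x != 0 -> invmx (mk x y) = mk x^-1 (- y).
Proof.
move=> hx; apply: invmx_right.
rewrite mkM ?invr_eq0 // mulfV // invrK mulrN (mulrC y x) addNr.
exact: mk_1.
Qed.

End Mx.

Section Eval.
Variable n : nat.
Variable K : fieldType.
Variable s : K.
Hypothesis hs : s != 0.
Variable M : nat.
Variable alpha : 'I_n -> K.

Definition phi (q : pos n) : int := \sum_(j < n) q j * (M ^ j)%N%:Z.

Lemma phiD p q : phi (p + q) = phi p + phi q.
Proof. by rewrite /phi -big_split; apply: eq_bigr => j _; rewrite ffunE mulrDl. Qed.

Lemma phi0 : phi 0 = 0.
Proof. by rewrite /phi big1 // => j _; rewrite ffunE mul0r. Qed.

Lemma phi_lstep (a : letter n) : phi (lstep a) = sgnz a.2 * (M ^ a.1)%N%:Z.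
Proof.
rewrite /phi (bigD1 a.1) //= ffunE eqxx big1 ?addr0 // => j /negbTE hj.
by rewrite ffunE hj mul0r.
Qed.

Definition Zmat (j : 'I_n) : 'M[K]_2 := mk (s ^ (M ^ j)%N%:Z) (alpha j).

Lemma sz_neq0 z : s ^ z != 0.
Proof. by rewrite expfz_eq0 (negbTE hs) andbF. Qed.

Lemma letm_mk (a : letter n) :
  (if a.2 then invmx (Zmat a.1) else Zmat a.1) =
  mk (s ^ phi (lstep a)) ((sgnz a.2)%:~R * alpha a.1).
Proof.
rewrite phi_lstep; case: a => i [] /=.
  rewrite /Zmat mkV ?sz_neq0 // invr_expz mulN1r.
  by congr mk; rewrite mulrN1z mulN1r.
by rewrite /Zmat !mul1r.
Qed.

Definition term (x : (pos n * 'I_n) * bool) : K :=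
  (sgnz x.2)%:~R * alpha x.1.2 * s ^ (M ^ x.1.2)%N%:Z * s ^ (2 * phi x.1.1).

Lemma word_eval_cons (Z : 'I_n -> 'M[K]_2) (a : letter n) u :
  word_eval Z (a :: u) = (if a.2 then invmx (Z a.1) else Z a.1) * word_eval Z u.
Proof. by rewrite /word_eval big_cons. Qed.

Lemma eval_edges w p : exists c, word_eval Zmat w = mk (s ^ phi (ev w)) c /\
  s ^ phi p * c * s ^ phi (p + ev w) = \sum_(x <- edges p w) term x.
Proof.
elim: w p => [|a u IH] p.
  exists 0; split; first by rewrite /word_eval big_nil /= phi0 expr0z mk_1.
  by rewrite mulr0 mul0r big_nil.
have [c' [he hc]] := IH (p + lstep a).
exists (s ^ phi (lstep a) * c' + (sgnz a.2)%:~R * alpha a.1 / s ^ phi (ev u)).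
split.
  rewrite word_eval_cons letm_mk he mkM ?sz_neq0 //=.
  by rewrite phiD expfzDr.
rewrite /= big_cons -hc addrA !phiD.
move: hc he; case: a => i [] /= hc he.
- rewrite /term /= phiD phi_lstep /=.
  rewrite (_ : 2 * (phi p + -1 * (M ^ i)%N%:Z) = phi p + phi p + - (M ^ i)%N%:Z + - (M ^ i)%N%:Z); last by ring.
  rewrite !expfzDr ?sz_neq0 // -!invr_expz.
  have h1 := sz_neq0 (phi p); have h2 := sz_neq0 (M ^ i)%N%:Z; have h3 := sz_neq0 (phi (ev u)).
  rewrite mulrN1z mulN1r ?muln1.
  field. by rewrite h2 h3.
- rewrite /term /= phi_lstep /=.
  rewrite (_ : 2 * phi p = phi p + phi p); last by ring.
  rewrite !mul1r !expfzDr ?sz_neq0 //.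
  have h1 := sz_neq0 (phi p); have h2 := sz_neq0 (M ^ i)%N%:Z; have h3 := sz_neq0 (phi (ev u)).
  field. by [].
Qed.

End Eval.

Lemma digits (M : nat) m (c : 'I_m -> int) : (forall j, - (M:int) < c j < M) ->
  \sum_(j < m) c j * (M ^ j)%N%:Z = 0 -> forall j, c j = 0.
Proof.
elim: m c => [|m IH] c hb hs j; first by case: j.
rewrite big_ord_recl /= in hs.
set h := \sum_(j < m) c (lift ord0 j) * (M ^ j)%N%:Z.
have hs' : c ord0 + M%:Z * h = 0.
  rewrite -hs /h mulr_sumr; congr (_ + _); first by rewrite expn0 mulr1.
  apply: eq_bigr => k _.
  rewrite /bump /= add1n expnS PoszM; ring.
have hh : h = 0.
  have := hb ord0; move: hs'; nia.
have c0 : c ord0 = 0 by move: hs'; rewrite hh mulr0 addr0.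
case: (unliftP ord0 j) => [j' ->|->] //.
by apply: (IH (fun k => c (lift ord0 k))) => // k; apply: hb.
Qed.

Lemma edges_bound n (p : pos n) (w : word n) x j : x \in edges p w ->
  p j - (size w)%:Z <= x.1.1 j <= p j + (size w)%:Z.
Proof.
elim: w p => [|[i b] u IH] p //=; rewrite inE => /orP [/eqP -> | hx] /=.
  case: b => /=; rewrite ?ffunE /=; case: (j == i) => /=; lia.
have := IH _ hx; rewrite !ffunE /=; case: (j == i); case: (b) => /=; lia.
Qed.

Section Inj.
Variable n : nat.
Variable L : nat.
Definition bnd (q : pos n) := forall j, - (L:int) <= q j <= L.

Lemma phi_inj (q q' : pos n) : bnd q -> bnd q' -> phi (2 * L).+1 q = phi (2 * L).+1 q' -> q = q'.
Proof.
move=> hq hq' he; apply/ffunP => j; apply/eqP; rewrite -subr_eq0; apply/eqP.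
apply: (@digits (2 * L).+1 _ (fun j => q j - q' j)) => [k|].
  by have := hq k; have := hq' k; lia.
under eq_bigr do rewrite mulrBl.
by rewrite sumrB -/(phi _ q) -/(phi _ q') he subrr.
Qed.

Definition Bsum : int := \sum_(j < n) (L%:Z * ((2 * L).+1 ^ j)%N%:Z).

Lemma phi_Bsum (q : pos n) : bnd q -> 0 <= 2 * phi (2 * L).+1 q + 2 * Bsum.
Proof.
move=> hq; rewrite -mulrDr mulr_ge0 // /phi /Bsum -big_split /=.
apply: sumr_ge0 => j _; rewrite -mulrDl mulr_ge0 //.
by have := hq j; lia.
Qed.

Definition expo (q : pos n) : nat := absz (2 * phi (2 * L).+1 q + 2 * Bsum).

Lemma expo_inj (q q' : pos n) : bnd q -> bnd q' -> expo q = expo q' -> q = q'.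
Proof.
move=> hq hq' he; apply: phi_inj => //.
have := congr1 Posz he; rewrite /expo !gez0_abs ?phi_Bsum //.
lia.
Qed.
End Inj.

Section Char0.
Variable K : fieldType.
Hypothesis hK : [pchar K] =i pred0.

Lemma natf_neq0 m : (m != 0)%N -> (m%:R : K) != 0.
Proof. by move=> hm; rewrite (pcharf0P _).1. Qed.

Lemma natf_inj a b : (a%:R : K) = b%:R -> a = b.
Proof.
wlog hab : a b / (a <= b)%N.
  by move=> W h; case: (leqP a b) => hab; [apply: W | apply/esym/W => //; apply: ltnW].
move=> h; have hb : b = (a + (b - a))%N by rewrite subnKC.
move: h; rewrite hb natrD -{1}[a%:R]addr0 => /addrI /esym /eqP.
rewrite (pcharf0P _).1 // => /eqP ->; by rewrite addn0.
Qed.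

Section Poly.
Variable n L : nat.
Variable l : seq ((pos n * 'I_n) * bool).
Hypothesis hl : forall x, x \in l -> bnd L x.1.1.
Variables (p0 : pos n) (i0 : 'I_n).
Hypothesis hp0 : bnd L p0.
Hypothesis hne : count_mem ((p0, i0), false) l != count_mem ((p0, i0), true) l.

Definition Pf (s : K) := \sum_(x <- l | x.1.2 == i0) (sgnz x.2)%:~R * s ^ (2 * phi (2 * L).+1 x.1.1).

Definition Qp : {poly K} := \sum_(x <- l | x.1.2 == i0) (sgnz x.2)%:~R *: 'X^(expo L x.1.1).

Lemma Qp_horner (s : K) : s != 0 -> Qp.[s] = Pf s * s ^ (2 * Bsum n L).
Proof.
move=> hs; rewrite /Qp horner_sum /Pf mulr_suml big_seq_cond [RHS]big_seq_cond; apply: eq_bigr => x /andP[hx _].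
rewrite hornerZ hornerXn -mulrA; congr (_ * _).
rewrite exprnP /expo gez0_abs; first exact: expfzDr.
by apply: phi_Bsum; apply: hl.
Qed.

Lemma count_sum (ll : seq ((pos n * 'I_n) * bool)) e :
  \sum_(x <- ll | x.1 == e) (sgnz x.2)%:~R = (count_mem (e, false) ll)%:R - (count_mem (e, true) ll)%:R :> K.
Proof.
elim: ll => [|[e' b] ll IH]; first by rewrite big_nil subrr.
rewrite big_cons /= IH !xpair_eqE (eq_sym e' e).
case: (e == e'); case: b => //=; rewrite ?add0n ?natrD; ring.
Qed.

Lemma Qp_coef : Qp`_(expo L p0) = (count_mem ((p0, i0), false) l)%:R - (count_mem ((p0, i0), true) l)%:R.
Proof.
rewrite -count_sum /Qp coef_sum.
rewrite big_mkcond [RHS]big_mkcond big_seq [RHS]big_seq; apply: eq_bigr => x hx.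
rewrite coefZ coefXn; case: x hx => [[q i] b] hx /=.
rewrite xpair_eqE andbC.
case: (i == i0) => //=.
case: (eqVneq q p0) => [->|hq]; first by rewrite eqxx mulr1.
case: eqP => he; last by rewrite mulr0.
case/eqP: hq; by apply: (expo_inj (hl hx)) => //; rewrite he.
Qed.

Lemma Qp_neq0 : Qp != 0.
Proof.
apply/eqP => h; have := Qp_coef; rewrite h coef0 => /eqP.
by rewrite eq_sym subr_eq0 => /eqP /natf_inj /eqP; rewrite (negbTE hne).
Qed.

Lemma exists_s : exists s : K, s != 0 /\ Pf s != 0.
Proof.
set rs := [seq (k.+1)%:R : K | k <- iota 0 (size Qp)].
have hu : uniq rs.
  by rewrite map_inj_uniq ?iota_uniq // => a b /natf_inj [].
have [r hr hroot] : exists2 r, r \in rs & ~~ root Qp r.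
  apply/allPn; apply/negP => hall.
  by have := max_poly_roots Qp_neq0 hall hu; rewrite size_map size_iota ltnn.
case/mapP: hr => k _ ->{r} in hroot *.
have hs : (k.+1)%:R != 0 :> K by apply: natf_neq0.
exists (k.+1)%:R; split => //.
apply/eqP => h0; move: hroot; rewrite /root Qp_horner // h0 mul0r eqxx.
by [].
Qed.
End Poly.
End Char0.

Section Final.
Variable K : fieldType.
Implicit Types (A B G N X : 'M[K]_2).

Lemma CH22 N : N * N = (N 0 0 + N 1 1) *: N - (\det N) *: 1.
Proof.
apply: mx22P; rewrite !mul22 det22 !mxE /=; ring.
Qed.

Lemma det_expr N k : \det (N ^+ k) = \det N ^+ k.
Proof.
elim: k => [|k IH]; first by rewrite !expr0 det1.
by rewrite !exprS detM IH.
Qed.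

Lemma nil2 N k : N ^+ k = 0 -> N * N = 0.
Proof.
case: k => [|j]; first by rewrite expr0 => /eqP; rewrite oner_eq0.
move=> hN.
have hd : \det N = 0.
  have := congr1 determinant hN; rewrite det_expr det0 => /eqP.
  by rewrite expf_eq0 => /andP[_ /eqP].
have hNN : N * N = (N 0 0 + N 1 1) *: N by rewrite CH22 hd scale0r subr0.
set t := N 0 0 + N 1 1 in hNN.
have hpow : forall m, N ^+ m.+1 = t ^+ m *: N.
  elim => [|m IH]; first by rewrite expr1 expr0 scale1r.
  by rewrite exprSr IH -scalerAl hNN scalerA exprSr.
move: hN; rewrite hpow => /eqP; rewrite scaler_eq0 => /orP [/eqP ht|/eqP ->].
  by rewrite hNN (eqP (_ : t == 0)) ?scale0r //; move: ht => /eqP; rewrite expf_eq0 => /andP[].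
by rewrite mul0r.
Qed.

Lemma unit_det1 A : \det A = 1 -> A \in unitmx.
Proof. by move=> h; rewrite unitmxE h unitr1. Qed.

Lemma mulV1 A : A \in unitmx -> invmx A * A = 1.
Proof. by move=> h; rewrite -mulmxE mulVmx. Qed.
Lemma mul1V A : A \in unitmx -> A * invmx A = 1.
Proof. by move=> h; rewrite -mulmxE mulmxV. Qed.

Lemma conj_eval n G (Z : 'I_n -> 'M[K]_2) w : G \in unitmx ->
  (forall i, Z i \in unitmx) ->
  word_eval (fun i => G * Z i * invmx G) w = G * word_eval Z w * invmx G.
Proof.
move=> hG hZ; elim: w => [|[i b] u IH].
  by rewrite /word_eval !big_nil mulr1 mul1V.
rewrite !word_eval_cons IH /=.
have -> : (if b then invmx (G * Z i * invmx G) else G * Z i * invmx G) =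
          G * (if b then invmx (Z i) else Z i) * invmx G.
  case: b => //; apply: invmx_right.
  rewrite -!mulrA (mulrA (invmx G)) mulV1 // mul1r (mulrA (Z i)) mul1V // mul1r.
  exact: mul1V.
by rewrite -!mulrA (mulrA (invmx G)) mulV1 // mul1r.
Qed.

End Final.

Unset Implicit Arguments.

Theorem corollary5p3 (n : nat) (hn : (2 <= n)%N) (w : word n)
    (hw1 : derived 1 w) (hw2 : ~ derived 2 w)
    (K : fieldType) (hK : [pchar K] =i pred0)
    (X : 'M[K]_2) (hX : in_SL2 X) (hXu : unipotent X) :
  exists Z : 'I_n -> 'M[K]_2, (forall i, in_SL2 (Z i)) /\ word_eval Z w = X.
Proof.
set l := edges 0 w.
have [[p0 i0] hin hne] : exists2 e, e \in map fst l &
    count_mem (e, false) l != count_mem (e, true) l.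
  case: (boolP (all (fun e => count_mem (e, false) l == count_mem (e, true) l) (map fst l)))
    => [hall|/allPn [e he hne]]; last by exists e.
  exfalso; apply: hw2; apply: level2 => // e.
  case: (boolP (e \in map fst l)) => [hin|hnin]; first exact/eqP/(allP hall).
  have h0 : forall b, count_mem (e, b) l = 0%N.
    move=> b; apply/count_memPn; apply: contra hnin => hx; apply/mapP; by exists (e, b).
  by rewrite !h0.
set L := size w.
have hl : forall x, x \in l -> bnd L x.1.1.
  by move=> x hx j; have := edges_bound j hx; rewrite ffunE sub0r add0r.
have hp0 : bnd L p0.
  case/mapP: hin => x hx hx1; have := hl x hx; by rewrite -hx1.
have [s [hs hP]] := exists_s hK hl hp0 hne.
set M := (2 * L).+1.
have hb : forall b : K, exists Z : 'I_n -> 'M[K]_2,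
    (forall i, in_SL2 (Z i)) /\ word_eval Z w = mk 1 b.
  move=> b.
  set kap := s ^ (M ^ i0)%N%:Z.
  have hkap : kap != 0 by apply: sz_neq0.
  set beta := b / (kap * Pf L l i0 s).
  set alpha := fun j : 'I_n => (j == i0)%:R * beta.
  exists (Zmat s M alpha); split.
    by move=> i; rewrite /in_SL2 /Zmat det_mk // sz_neq0.
  have [c [he hc]] := eval_edges hs M alpha w 0.
  rewrite he (derived1_ev hw1) phi0 expr0z; congr mk.
  move: hc; rewrite add0r (derived1_ev hw1) phi0 expr0z mul1r mulr1 => ->.
  transitivity (beta * kap * Pf L l i0 s); last first.
    by rewrite /beta; field; apply/andP.
  rewrite /Pf mulr_sumr [RHS]big_mkcond; apply: eq_bigr => x _.
  rewrite /term /alpha; case: (x.1.2 =P i0) => [->|_] /=; last by rewrite mul0r mulr0 !mul0r.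
  by rewrite /kap; ring.
case: hXu => k hk.
have hN := nil2 hk.
have e2 : forall i j, (X - 1) i j = X i j - (i == j)%:R by move=> i j; rewrite !mxE.
have r00 := congr1 (fun A : 'M[K]_2 => A 0 0) hN.
have r10 := congr1 (fun A : 'M[K]_2 => A 1 0) hN.
have r11 := congr1 (fun A : 'M[K]_2 => A 1 1) hN.
move: r00 r10 r11; rewrite /= !mul22 !e2 !mxE /= => r00 r10 r11.
rewrite !subr0 in r00 r10 r11.
case: (eqVneq (X 1 0) 0) => hz.
  have : (X 0 0 - 1) * (X 0 0 - 1) = 0 by rewrite -r00 hz mulr0 addr0.
  move/eqP; rewrite mulf_eq0 orbb => /eqP hx.
  have : (X 1 1 - 1) * (X 1 1 - 1) = 0 by rewrite -r11 hz mul0r add0r.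
  move/eqP; rewrite mulf_eq0 orbb => /eqP ht.
  have [Z [hZ he]] := hb (X 0 1); exists Z; split => //; rewrite he.
  apply: mx22P; rewrite !mkE ?invr1 //.
  - by apply/eqP; rewrite eq_sym -subr_eq0 hx.
  - by apply/eqP; rewrite eq_sym -subr_eq0 ht.
set x := X 0 0 - 1 in r00 r10 r11 *.
have ht : X 1 1 - 1 = - x.
  apply/eqP; rewrite -addr_eq0; apply/eqP.
  apply: (mulfI hz); rewrite mulr0 -r10; ring.
set G : 'M[K]_2 := \matrix_(i, j) if (i : nat) == 0%N then (if (j : nat) == 0%N then x else 1)
  else (if (j : nat) == 0%N then X 1 0 else 0).
have hdG : \det G = - X 1 0 by rewrite det22 !mxE /=; ring.
have hGu : G \in unitmx by rewrite unitmxE hdG unitfE oppr_eq0.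
have hX00 : X 0 0 = x + 1 by rewrite /x subrK.
have hX11 : X 1 1 = 1 - x by rewrite -[X 1 1](subrK 1) ht addrC.
have hXG : X * G = G * mk 1 1.
  apply: mx22P; rewrite !mul22 !mkE ?invr1 !mxE /= ?hX00 ?hX11.
  - transitivity (x * x + X 0 1 * X 1 0 + x); first by ring.
    by rewrite r00; ring.
  - ring.
  - ring.
  - ring.
have hXe : X = G * mk 1 1 * invmx G by rewrite -hXG -mulrA mul1V // mulr1.
have [Z [hZ he]] := hb 1.
exists (fun i => G * Z i * invmx G); split.
  move=> i; have hZi := hZ i; rewrite /in_SL2 in hZi *.
  rewrite !detM hZi mulr1 -det_mulmx (mulmxV hGu); exact: det1.
transitivity (G * word_eval Z w * invmx G); last by rewrite he -hXe.
apply: conj_eval => // i; apply: unit_det1; exact: hZ.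
Qed.
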